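(* Let $d\ge2$. There exist positive constants $c^-=c^-(d)$ and $c^+=c^+(d)$ such that, for $\mathbf p=(p_1,\dots,p_d)$: (i) with high probability $\mathcal G(n,\mathbf p)$ is not topologically connected if $p_k\le\frac{c^-\log n}{n^k}$ for all $k\in[d]$; (ii) with high probability $\mathcal G(n,\mathbf p)$ is topologically connected if $p_k\ge\frac{c^+\log n}{n^k}$ for some $k\in[d]$.
   Context: $\mathcal G(n,\mathbf p)$: random simplicial complex on $[n]$ where for each $k\in[d]$ each $(k+1)$-subset of $[n]$ independently is an edge with probability $p_k\in[0,1]$; the complex consists of all singletons and all nonempty subsets of edges. Topologically connected means connected as a topological space (equivalently, the underlying hypergraph is vertex-connected). Whp = with probability tending to $1$ as $n\to\infty$. *)

(* Defs.v *)
From HB Require Import structures.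
From mathcomp Require Import all_boot all_order all_algebra.
From mathcomp Require Import all_classical all_reals all_analysis.
From mathcomp Require Import Rstruct Rstruct_topology.
Set Implicit Arguments. Unset Strict Implicit. Unset Printing Implicit Defensive.
Import Order.TTheory GRing.Theory Num.Theory.
Local Open Scope ring_scope.
Notation R := Rdefinitions.R.

(* A configuration of the random complex G(n,p) on vertex set 'I_n:
   x S = true  means the subset S is drawn as an edge. *)
Definition conf (n : nat) := {ffun {set 'I_n} -> bool}.

(* S is a potential edge of G(n,p) with p = (p_1..p_d): a (k+1)-subset, k in [d]. *)
Definition edge_size_ok (d n : nat) (S : {set 'I_n}) : bool :=
  (2 <= #|S| <= d.+1)%N.

Definition weight (d : nat) (q : nat -> R) (n : nat) (x : conf n) : R :=
  \prod_(S : {set 'I_n})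
     (if edge_size_ok d S
      then (if x S then q (#|S|.-1) else 1 - q (#|S|.-1))
      else (if x S then 0 else 1)).

Definition prob (d : nat) (q : nat -> R) (n : nat) (E : pred (conf n)) : R :=
  \sum_(x : conf n | E x) weight d q x.

Definition adj (d n : nat) (x : conf n) : rel 'I_n :=
  fun u v => [exists S : {set 'I_n}, [&& x S, edge_size_ok d S, u \in S & v \in S]].

(* Topologically connected = underlying hypergraph vertex-connected. *)
Definition top_connected (d n : nat) (x : conf n) : bool :=
  [forall u : 'I_n, [forall v : 'I_n, connect (adj d x) u v]].

(* Main.v *)
Require Import Defs.
From HB Require Import structures.
From mathcomp Require Import all_boot all_order all_algebra.
From mathcomp Require Import all_classical all_reals all_analysis.
From mathcomp Require Import Rstruct Rstruct_topology.
Import Order.TTheory GRing.Theory Num.Theory.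
Local Open Scope ring_scope.
Local Notation R := Rdefinitions.R.
Import numFieldNormedType.Exports.
Local Open Scope classical_set_scope.
Local Open Scope ring_scope.
From mathcomp Require Import ring lra zify.
Set Implicit Arguments. Unset Strict Implicit. Unset Printing Implicit Defensive.

Definition NE (n : nat) (F : {set 'I_n} -> bool) (x : conf n) := [forall S, F S ==> ~~ x S].
Definition cross (n : nat) (A S : {set 'I_n}) := (S :&: A != finset.set0) && (S :\: A != finset.set0).

Section Gen.
Variables (d n : nat) (q : nat -> R).
Hypothesis q01 : forall k, (1 <= k <= d)%N -> 0 <= q k <= 1.

Definition fac (S : {set 'I_n}) (b : bool) : R :=
  if edge_size_ok d S then (if b then q (#|S|.-1) else 1 - q (#|S|.-1))
  else (if b then 0 else 1).

Lemma ok_k (S : {set 'I_n}) : edge_size_ok d S -> (1 <= #|S|.-1 <= d)%N.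
Proof. rewrite /edge_size_ok => /andP[h1 h2]; apply/andP; split; lia. Qed.

Lemma fac_ge0 S b : 0 <= fac S b.
Proof.
rewrite /fac; case: ifP => [/ok_k/q01/andP[h1 h2]|_]; case: b => //; lra.
Qed.

Lemma fac_sum S : fac S true + fac S false = 1.
Proof. rewrite /fac; case: ifP => _; lra. Qed.

Lemma weightE (x : conf n) : weight d q x = \prod_S fac S (x S).
Proof. by []. Qed.

Lemma weight_ge0 (x : conf n) : 0 <= weight d q x.
Proof. by rewrite weightE; apply: prodr_ge0 => S _; apply: fac_ge0. Qed.

Lemma prob_forall (G : {set 'I_n} -> bool -> bool) :
  prob d q (fun x : conf n => [forall S, G S (x S)]) =
  \prod_S (\sum_b (if G S b then fac S b else 0)).
Proof.
rewrite bigA_distr_bigA /prob.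
rewrite [RHS](bigID (fun x : conf n => [forall S, G S (x S)])) /=.
rewrite [X in _ = _ + X]big1 ?addr0.
  by apply: eq_bigr => x /forallP H; apply: eq_bigr => S _; rewrite H.
move=> x /forallPn[S HS]; rewrite (bigD1 S) //= (negbTE HS) mul0r //.
Qed.

Lemma prob_ext (E1 E2 : pred (conf n)) : E1 =1 E2 -> prob d q E1 = prob d q E2.
Proof. by move=> h; rewrite /prob; apply: eq_bigl. Qed.

Lemma prob_ge0 (E : pred (conf n)) : 0 <= prob d q E.
Proof. by apply: sumr_ge0 => x _; apply: weight_ge0. Qed.

Lemma prob_le (E1 E2 : pred (conf n)) : (forall x, E1 x -> E2 x) -> prob d q E1 <= prob d q E2.
Proof.
move=> h; rewrite /prob [X in _ <= X](bigID E1) /=.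
have -> : \sum_(i | E2 i && E1 i) weight d q i = \sum_(i | E1 i) weight d q i.
  by apply: eq_bigl => x; case E: (E1 x); rewrite ?andbT ?andbF ?(h _ E).
rewrite lerDl; apply: sumr_ge0 => x _; exact: weight_ge0.
Qed.

Lemma prob_total : prob d q (predT : pred (conf n)) = 1.
Proof.
have h := prob_forall (fun _ _ => true).
rewrite (@prob_ext _ (fun x : conf n => [forall S, (fun _ _ => true) S (x S)])); last first.
  by move=> x; rewrite /= ; apply/esym/forallP.
rewrite h big1 // => S _; rewrite big_bool /=; exact: fac_sum.
Qed.

Lemma prob_compl (E : pred (conf n)) : prob d q E + prob d q (fun x => ~~ E x) = 1.
Proof. by rewrite -prob_total /prob [in RHS](bigID E). Qed.


Definition qS (S : {set 'I_n}) := q (#|S|.-1).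

Lemma prob_NE F : prob d q (NE F) =
  \prod_S (1 - (if F S && edge_size_ok d S then qS S else 0)).
Proof.
rewrite /NE (prob_forall (fun S b => F S ==> ~~ b)); apply: eq_bigr => S _.
rewrite big_bool /= /fac /qS; case: (F S); case: (edge_size_ok d S) => /=; lra.
Qed.

End Gen.
Section Comb.
Variable n : nat.

Lemma sum_subsets (t : R) : \sum_(B : {set 'I_n}) t ^+ #|B| = (1 + t) ^+ n.
Proof.
have -> : (1 + t) ^+ n = \prod_(i : 'I_n) \sum_(b : bool) (if b then t else 1).
  rewrite -[in LHS](card_ord n) -prodr_const; apply: eq_bigr => i _.
  by rewrite big_bool /= addrC.
rewrite bigA_distr_bigA /=.
rewrite (reindex (fun A : {set 'I_n} => [ffun i => i \in A])) /=; last first.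
  exists (fun f : {ffun 'I_n -> bool} => [set i | f i]%SET) => [A _|f _].
    by apply/setP => i; rewrite inE ffunE.
  by apply/ffunP => i; rewrite ffunE inE.
apply: eq_bigr => A _.
rewrite -prodr_const [LHS]big_mkcond /=; apply: eq_bigr => i _.
by rewrite ffunE.
Qed.

Lemma sum_sub_le (T : finType) (P : pred T) (g : T -> R) :
  (forall x, 0 <= g x) -> \sum_(x | P x) g x <= \sum_x g x.
Proof.
move=> h; rewrite [X in _ <= X](bigID P) /= lerDl; exact: sumr_ge0.
Qed.

Lemma sum_super (T : {set 'I_n}) (g : nat -> R) :
  (forall k, 0 <= g k) ->
  \sum_(S : {set 'I_n} | T \subset S) g #|S :\: T| <= \sum_(B : {set 'I_n}) g #|B|.
Proof.
move=> g0.
have inj : {in [set S : {set 'I_n} | T \subset S]%SET &, injective (fun S => S :\: T)}.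
  move=> S1 S2; rewrite !inE => h1 h2 e.
  by rewrite -(setID S1 T) -(setID S2 T) e (finset.setIidPr h1) (finset.setIidPr h2).
have := big_imset (fun B : {set 'I_n} => g #|B|) inj => /= e.
have -> : \sum_(S : {set 'I_n} | T \subset S) g #|S :\: T| = \sum_(S in [set S : {set 'I_n} | T \subset S]%SET) g #|S :\: T|.
  by apply: eq_bigl => S; rewrite inE.
rewrite -e; exact: sum_sub_le.
Qed.

Lemma card_super (T S : {set 'I_n}) : T \subset S -> #|S| = (#|T| + #|S :\: T|)%N.
Proof. by move=> h; rewrite -(cardsID T S) (finset.setIidPr h). Qed.

End Comb.
Section Conn.
Variables (d n : nat).

Lemma adj_sym (x : conf n) u v : adj d x u v -> adj d x v u.
Proof.
move=> /existsP[S /and4P[a b c e]]; apply/existsP; exists S; apply/and4P; split => //.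
Qed.

Lemma iso_disconn (x : conf n) u : (1 < n)%N -> NE (fun S => u \in S) x -> ~~ top_connected d x.
Proof.
move=> n1 hiso.
have [v vu] : exists v : 'I_n, v != u.
  have : (0 < #|(~: [set u]%SET : {set 'I_n})|)%N by rewrite cardsC1 card_ord; lia.
  by rewrite card_gt0 => /set0Pn[v]; rewrite !inE => h; exists v.
apply/negP => /forallP/(_ u)/forallP/(_ v)/connectP[p pth lst].
case: p pth lst => [/= _ e|w p /= /andP[a _] _]; first by rewrite e eqxx in vu.
move: a => /existsP[S /and4P[xS _ uS _]].
by move/forallP: hiso => /(_ S); rewrite uS xS.
Qed.

Lemma disconn_cut (x : conf n) : ~~ top_connected d x ->
  exists A : {set 'I_n}, [&& (0 < #|A|)%N, (#|A|.*2 <= n)%N &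
     NE (fun S => cross A S && edge_size_ok d S) x].
Proof.
move/forallPn => [u /forallPn [v nc]].
pose C := [set w | connect (adj d x) u w]%SET.
have clos : forall w w', adj d x w w' -> (w \in C) = (w' \in C).
  move=> w w' a; rewrite !inE; apply/idP/idP => h.
    exact: connect_trans h (connect1 a).
  exact: connect_trans h (connect1 (adj_sym a)).
have key : forall A, (A = C \/ A = ~: C) -> NE (fun S => cross A S && edge_size_ok d S) x.
  move=> A hA; apply/forallP => S; apply/implyP => /andP[/andP[h1 h2] hok].
  apply/negP => xS.
  case/set0Pn: h1 => w; rewrite inE => /andP[wS wA].
  case/set0Pn: h2 => w'; rewrite inE => /andP[w'A w'S].
  have a : adj d x w w' by apply/existsP; exists S; apply/and4P.
  have := clos _ _ a.
  move: wA w'A; case: hA => ->; rewrite ?inE.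
    by move=> -> /negPf ->.
  by rewrite negbK => /negPf -> ->.
have uC : u \in C by rewrite inE connect0.
have vC : v \notin C by rewrite inE.
have hc := cardsC C; rewrite card_ord in hc.
case: (leqP (#|C|.*2) n) => h.
  exists C; apply/and3P; split => //; last by apply: key; left.
  by rewrite card_gt0; apply/set0Pn; exists u.
exists (~: C); apply/and3P; split; last by apply: key; right.
  by rewrite card_gt0; apply/set0Pn; exists v; rewrite inE.
move: hc h; rewrite -!muln2; move: #|C| #|~: C| => a b; lia.
Qed.
End Conn.

Lemma ffact_ge k j : (j.+1 ^ k <= (j + k) ^_ k)%N.
Proof.
elim: k j => [|k IH] j; first by rewrite expn0 ffactn0.
rewrite addnS ffactSS expnS leq_mul //; lia.
Qed.

Lemma sum_le_cond (T : finType) (P Q : pred T) (g : T -> R) :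
  (forall x, 0 <= g x) -> (forall x, P x -> Q x) ->
  \sum_(x | P x) g x <= \sum_(x | Q x) g x.
Proof.
move=> g0 PQ; rewrite big_mkcond [X in _ <= X]big_mkcond /=; apply: ler_sum => x _.
case Px: (P x); first by rewrite (PQ _ Px).
by case: (Q x).
Qed.



Section PartII.
Variables (d n k : nat) (q : nat -> R).
Hypothesis q01 : forall k, (1 <= k <= d)%N -> 0 <= q k <= 1.
Hypothesis hk : (1 <= k <= d)%N.

Lemma cross_count (A : {set 'I_n}) :
  (#|A| * 'C(n - #|A|, k) <= #|[set S : {set 'I_n} | cross A S && (#|S| == k.+1)]%SET|)%N.
Proof.
pose D := finset.setX A [set B : {set 'I_n} | B \subset ~: A & #|B| == k]%SET.
have cD : #|D| = (#|A| * 'C(n - #|A|, k))%N.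
  have hc : #|~: A| = (n - #|A|)%N.
    by have := cardsC A; rewrite card_ord; move: #|A| #|~: A| => a b; lia.
  by rewrite cardsX cards_draws hc.
rewrite -cD.
have key : forall (v : 'I_n) (B : {set 'I_n}), v \in A -> B \subset ~: A -> ((v |: B) :&: A = [set v]%SET) /\ ((v |: B) :\: A = B).
  move=> v B vA hB; split; apply/setP => w; rewrite !inE.
    case: (eqVneq w v) => [->|wv] /=; first by rewrite vA.
    case wB: (w \in B) => //=; have := fintype.subsetP hB w wB; rewrite inE.
    by move=> /negPf.
  case: (eqVneq w v) => [->|wv] /=.
    by rewrite vA /=; apply/esym/negP => /(fintype.subsetP hB); rewrite inE vA.
  case wB: (w \in B); rewrite /= ?andbT ?andbF //.
  by have := fintype.subsetP hB w wB; rewrite inE.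
have inj : {in D &, injective (fun vB : 'I_n * {set 'I_n} => vB.1 |: vB.2)}.
  move=> [v B] [v' B']; rewrite !inE /= => /andP[vA /andP[hB _]] /andP[v'A /andP[hB' _]] e.
  have [e1 e2] := key _ _ vA hB; have [e1' e2'] := key _ _ v'A hB'.
  rewrite e in e1 e2; rewrite e1' in e1; rewrite e2' in e2.
  by move/set1_inj: e1 => ->; rewrite e2.
rewrite -(card_in_imset inj); apply: subset_leq_card; apply/fintype.subsetP => S.
case/imsetP => [[v B]]; rewrite !inE /= => /andP[vA /andP[hB /eqP cB]] ->.
have [e1 e2] := key _ _ vA hB.
rewrite /cross e1 e2 cardsU1.
have vB : v \notin B by apply/negP => /(fintype.subsetP hB); rewrite inE vA.
rewrite vB cB add1n eqxx andbT; apply/andP; split.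
  by rewrite -card_gt0 cards1.
by rewrite -card_gt0 cB; case/andP: hk.
Qed.
Lemma probEA (A : {set 'I_n}) :
  prob d q (NE (fun S => cross A S && edge_size_ok d S)) <=
  ((1 - q k) ^+ 'C(n - #|A|, k)) ^+ #|A|.
Proof.
have [qk0 qk1] : 0 <= q k /\ q k <= 1 by case/andP: (q01 hk).
rewrite prob_NE.
apply: (@le_trans _ _ (\prod_S (if cross A S && (#|S| == k.+1) then 1 - q k else 1))).
  apply: ler_prod => S _; case: (boolP (cross A S && (#|S| == k.+1))) => [/andP[c /eqP cS]|_].
    have ok : edge_size_ok d S by rewrite /edge_size_ok cS; case/andP: hk => a b; apply/andP; split; lia.
    rewrite c ok /qS cS /=; apply/andP; split; lra.
  case: ifP => [/andP[_ ok]|_]; last by apply/andP; split; lra.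
  have := q01 (ok_k ok); rewrite /qS => /andP[a b]; apply/andP; split; lra.
rewrite -big_mkcond /=.
have -> : \prod_(S | cross A S && (#|S| == k.+1)) (1 - q k) =
          \prod_(S in [set S : {set 'I_n} | cross A S && (#|S| == k.+1)]%SET) (1 - q k).
  by apply: eq_bigl => S; rewrite inE.
rewrite prodr_const -exprM mulnC; apply: ler_wiXn2l; try lra.
exact: cross_count.
Qed.

End PartII.

Section Union.
Variables (d n : nat) (q : nat -> R).
Hypothesis q01 : forall k, (1 <= k <= d)%N -> 0 <= q k <= 1.

Lemma disconn_bound (z : R) : 0 <= z ->
  (forall A : {set 'I_n}, (0 < #|A|)%N -> (#|A|.*2 <= n)%N ->
     prob d q (NE (fun S => cross A S && edge_size_ok d S)) <= z ^+ #|A|) ->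
  prob d q (fun x : conf n => ~~ top_connected d x) <= (1 + z) ^+ n - 1.
Proof.
move=> z0 hA.
pose good (A : {set 'I_n}) := (0 < #|A|)%N && (#|A|.*2 <= n)%N.
pose E (A : {set 'I_n}) := NE (fun S => cross A S && edge_size_ok d S).
have w0 := weight_ge0 q01.
have step1 : prob d q (fun x : conf n => ~~ top_connected d x) <=
             \sum_(A | good A) prob d q (E A).
  rewrite /prob.
  apply: (@le_trans _ _ (\sum_(x : conf n | ~~ top_connected d x) \sum_(A | good A && E A x) weight d q x)).
    apply: ler_sum => x hx.
    have [A /and3P[a1 a2 a3]] := disconn_cut hx.
    rewrite (bigD1 A) /=; last by rewrite /good a1 a2.
    rewrite lerDl; apply: sumr_ge0 => B _; exact: w0.
  apply: (@le_trans _ _ (\sum_(x : conf n) \sum_(A | good A && E A x) weight d q x)).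
    apply: sum_le_cond => // x; apply: sumr_ge0 => B _; exact: w0.
  under eq_bigr do rewrite big_mkcondr /=.
  rewrite exchange_big /=; apply: ler_sum => A _.
  by rewrite [X in _ <= X]big_mkcond.
apply: (le_trans step1).
apply: (@le_trans _ _ (\sum_(A : {set 'I_n} | A != finset.set0) z ^+ #|A|)).
  apply: (@le_trans _ _ (\sum_(A | good A) z ^+ #|A|)); first by apply: ler_sum => A /andP[a1 a2]; apply: hA.
  apply: sum_le_cond => [A|A /andP[a1 _]]; first exact: exprn_ge0.
  by rewrite -card_gt0.
rewrite -sum_subsets [X in _ <= X - 1](bigD1 finset.set0) //= cards0 expr0 addrC addrK.
apply: sum_le_cond => // A; exact: exprn_ge0.
Qed.
End Union.

Lemma expR_le12 (y : R) : 0 <= y -> y <= 1/2 -> expR y <= 1 + 2 * y.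
Proof.
move=> y0 y1; have h := expR_ge1Dx (- y); rewrite expRN in h.
have E0 := expR_gt0 y.
have h2 : (1 - y) * expR y <= 1.
  have := ler_wpM2r (ltW E0) h; rewrite mulVf ?gt_eqF //.
nra.
Qed.

Lemma partII (d n k : nat) (q : nat -> R) :
  (forall k, (1 <= k <= d)%N -> 0 <= q k <= 1) ->
  (1 <= k <= d)%N -> (4 * d <= n)%N -> (2 <= n)%N ->
  (2 * (4 ^ d * d`!)%N%:R) * ln n%:R / n%:R ^+ k <= q k ->
  prob d q (fun x : conf n => ~~ top_connected d x) <= 2 / n%:R.
Proof.
move=> q01 hk hn n2 hq.
have [qk0 qk1] : 0 <= q k /\ q k <= 1 by case/andP: (q01 _ hk).
pose m := (n - n %/ 2)%N.
pose Cm := 'C(m, k).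
have hC : (n ^ k <= 4 ^ d * d`! * Cm)%N.
  have mk : (k <= m)%N by rewrite /m; case/andP: hk => a b; lia.
  have h1 : ((m - k).+1 ^ k <= Cm * k`!)%N.
    by rewrite /Cm bin_ffact; have := ffact_ge k (m - k); rewrite subnK.
  have h2 : (n <= 4 * (m - k).+1)%N by rewrite /m; case/andP: hk => a b; lia.
  apply: (@leq_trans ((4 * (m - k).+1) ^ k)); first by rewrite leq_exp2r //; case/andP: hk.
  apply: (@leq_trans (4 ^ k * (k`! * Cm))).
    by rewrite expnMn leq_mul2l mulnC h1 orbT.
  rewrite mulnA; case/andP: hk => a b; apply: leq_mul => //.
  by apply: leq_mul; [exact: leq_pexp2l | exact: leq_fact].
pose z := (1 - q k) ^+ Cm.
have z0 : 0 <= z by apply: exprn_ge0; lra.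
apply: (@le_trans _ _ ((1 + z) ^+ n - 1)).
  apply: disconn_bound => // A a1 a2.
  apply: (le_trans (probEA q01 hk A)).
  apply: lerXn2r; rewrite ?nnegrE ?exprn_ge0 //; try lra.
  apply: ler_wiXn2l; try lra.
  apply: leq_bin2l; rewrite /m; move: a2; rewrite -muln2; move: #|A| => a; lia.
have n0 : (0 : R) < n%:R by rewrite ltr0n; lia.
have ln0 : 0 <= ln (n%:R : R) by apply: ln_ge0; rewrite ler1n; lia.
have hz : z <= (n%:R ^+ 2)^-1.
  apply: (@le_trans _ _ (expR (- q k) ^+ Cm)).
    apply: lerXn2r; rewrite ?nnegrE ?(ltW (expR_gt0 _)) //; first lra.
    by have := expR_ge1Dx (- q k); rewrite addrC.
  rewrite -expRM_natl.
  have -> : (n%:R ^+ 2 : R) = expR (2%:R * ln n%:R) by rewrite expRM_natl lnK // posrE.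
  rewrite -expRN ler_expR mulrN lerN2.
  have hC' : (n%:R ^+ k : R) <= (4 ^ d * d`!)%N%:R * Cm%:R by rewrite -natrX -natrM ler_nat.
  have nk0 : (0 : R) < n%:R ^+ k by apply: exprn_gt0.
  have : 2 * (4 ^ d * d`!)%N%:R * ln n%:R * Cm%:R / n%:R ^+ k <= q k * Cm%:R.
    rewrite mulrAC; apply: ler_wpM2r => //; exact: ler0n.
  move=> h; apply: (le_trans _ (le_trans h _)); last by rewrite mulrC.
  rewrite ler_pdivlMr // -!mulrA; apply: ler_wpM2l => //.
  by rewrite mulrCA; apply: ler_wpM2l.
have hz2 : n%:R * z <= n%:R^-1.
  apply: (le_trans (ler_wpM2l (ler0n _ n) hz)).
  by rewrite expr2 invfM mulrA mulfV ?mul1r // gt_eqF.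
have hinv : (n%:R : R)^-1 <= 1/2.
  rewrite div1r lef_pV2 ?posrE // ?ler_nat //.
have : (1 + z) ^+ n <= 1 + 2 * (n%:R * z).
  apply: (@le_trans _ _ (expR z ^+ n)).
    by apply: lerXn2r; rewrite ?nnegrE ?(ltW (expR_gt0 _)) ?addr_ge0 // expR_ge1Dx.
  rewrite -expRM_natl; apply: expR_le12; first by apply: mulr_ge0 => //; exact: ler0n.
  lra.
move=> h; rewrite lerBlDl; apply: (le_trans h); rewrite lerD2l.
by rewrite ler_pM2l // div1r.
Qed.


Lemma prod_1m_ge (I : finType) (a : I -> R) :
  (forall i, 0 <= a i <= 1) -> 1 - \sum_i a i <= \prod_i (1 - a i).
Proof.
move=> ha.
suff [] : 0 <= \sum_i a i /\ 1 - \sum_i a i <= \prod_i (1 - a i) by [].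
elim/big_rec2: _ => [|i y x _ [y0 IH]]; first by split; lra.
have /andP[a0 a1] := ha i.
have : (1 - a i) * (1 - y) <= (1 - a i) * x by apply: ler_wpM2l; lra.
split; nra.
Qed.

Lemma prod_1m_exp (I : finType) (a : I -> R) :
  (forall i, 0 <= a i <= 1/2) -> expR (- (2 * \sum_i a i)) <= \prod_i (1 - a i).
Proof.
move=> ha; rewrite mulr_sumr -sumrN expR_sum; apply: ler_prod => i _.
have /andP[a0 a1] := ha i.
rewrite (ltW (expR_gt0 _)) /= expRN.
have E0 := expR_gt0 (2 * a i).
have h := expR_ge1Dx (2 * a i).
rewrite -div1r ler_pdivrMr //.
have : (1 - a i) * (1 + 2 * a i) <= (1 - a i) * expR (2 * a i) by apply: ler_wpM2l; lra.
nra.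
Qed.

Section PartI.
Variables (d n : nat) (q : nat -> R) (c L : R).
Hypothesis q01 : forall k, (1 <= k <= d)%N -> 0 <= q k <= 1.
Hypothesis n2 : (2 <= n)%N.
Hypothesis c0 : 0 <= c.
Hypothesis hc : c * expR 1 <= 1/4.
Hypothesis L0 : 0 <= L.
Hypothesis Ln : L <= n%:R.
Hypothesis hq : forall k, (1 <= k <= d)%N -> q k <= c * L / n%:R ^+ k.

Let t : R := n%:R^-1.
Let n0 : (0 : R) < n%:R.
Proof. by rewrite ltr0n; lia. Qed.

Let a (F : {set 'I_n} -> bool) (S : {set 'I_n}) : R :=
  if F S && edge_size_ok d S then qS q S else 0.

Let a01 F S : 0 <= a F S <= 1.
Proof.
rewrite /a; case: ifP => [/andP[_ ok]|_]; last by rewrite lexx ler01.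
exact: q01 (ok_k ok).
Qed.

Lemma qS_le (S : {set 'I_n}) : edge_size_ok d S -> qS q S <= c * L * t ^+ #|S|.-1.
Proof.
move=> ok; apply: (le_trans (hq (ok_k ok))).
by rewrite /t exprVn.
Qed.

Lemma tpow : (1 + t) ^+ n <= expR 1.
Proof.
apply: (@le_trans _ _ (expR t ^+ n)).
  apply: lerXn2r; rewrite ?nnegrE ?(ltW (expR_gt0 _)) ?expR_ge1Dx //.
  by apply: addr_ge0 => //; rewrite /t invr_ge0 ltW.
by rewrite -expRM_natl /t mulfV ?gt_eqF.
Qed.

Lemma sumT (T : {set 'I_n}) : (0 < #|T|)%N ->
  \sum_S a (fun S => T \subset S) S <= c * L * t ^+ #|T|.-1 * expR 1.
Proof.
move=> T0.
have t0 : 0 <= t by rewrite /t invr_ge0 ltW.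
have K0 : 0 <= c * L * t ^+ #|T|.-1 by rewrite !mulr_ge0 // exprn_ge0.
apply: (@le_trans _ _ (\sum_(S : {set 'I_n}) (if T \subset S then c * L * t ^+ #|T|.-1 * t ^+ #|S :\: T| else 0))).
  apply: ler_sum => S _; rewrite /a; case TS: (T \subset S) => /=; last by [].
  case: ifP => ok; last by rewrite mulr_ge0 // exprn_ge0.
  apply: (le_trans (qS_le ok)); rewrite -[X in _ <= X]mulrA -exprD (card_super TS).
  by have -> : ((#|T| + #|S :\: T|).-1 = #|T|.-1 + #|S :\: T|)%N by lia.
rewrite -big_mkcond /= -mulr_sumr; apply: ler_wpM2l => //.
have h := @sum_super n T (fun k => t ^+ k) (fun k => exprn_ge0 k t0).
apply: (le_trans h); rewrite sum_subsets; exact: tpow.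
Qed.

Lemma t01 : 0 <= t <= 1.
Proof.
rewrite /t invr_ge0 (ltW n0) /= invf_le1 //; rewrite ler1n; lia.
Qed.

Lemma c14 : c <= 1/4.
Proof.
apply: le_trans hc; rewrite -[X in X <= _]mulr1; apply: ler_wpM2l => //.
by have := expR_ge1Dx (1 : R); lra.
Qed.

Lemma a_half F S : a F S <= 1/2.
Proof.
rewrite /a; case: ifP => [/andP[_ ok]|_]; last by lra.
have [t0 t1] : 0 <= t /\ t <= 1 by case/andP: t01.
apply: (le_trans (qS_le ok)).
have k1 : (1 <= #|S|.-1)%N by case/andP: (ok_k ok).
have : t ^+ #|S|.-1 <= t.
  by rewrite -[X in _ <= X]expr1; apply: ler_wiXn2l.
have : L * t <= 1 by rewrite /t ler_pdivrMr // mul1r.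
move=> h1 h2; have h3 : L * t ^+ #|S|.-1 <= 1 by apply: le_trans h1; apply: ler_wpM2l.
have := c14; rewrite -mulrA; have : c * (L * t ^+ #|S|.-1) <= c by rewrite -[X in _ <= X]mulr1; apply: ler_wpM2l.
lra.
Qed.

Definition Iso (u : 'I_n) := NE (fun S : {set 'I_n} => [set u]%SET \subset S).

Lemma pi_ge u : expR (- (L / 2)) <= prob d q (Iso u).
Proof.
rewrite /Iso prob_NE.
have h' : forall S, 0 <= a (fun S => [set u]%SET \subset S) S <= 1/2.
  by move=> S; rewrite a_half andbT; case/andP: (a01 (fun S => [set u]%SET \subset S) S).
apply: le_trans (prod_1m_exp h'); rewrite ler_expR lerN2.
have := sumT (T := [set u]%SET); rewrite cards1 expr0 mulr1 => /(_ isT) hs.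
have : c * L * expR 1 <= L / 4.
  rewrite mulrAC mulrC; have := ler_wpM2l L0 hc; lra.
lra.
Qed.

Lemma rho_ge (u v : 'I_n) : u != v ->
  1 - L * t / 4 <= \prod_S (1 - a (fun S => [set u; v]%SET \subset S) S).
Proof.
move=> uv; apply: le_trans (prod_1m_ge (a01 _)).
have := sumT (T := [set u; v]%SET); rewrite cards2 uv expr1 => /(_ isT) hs.
have [t0 _] : 0 <= t /\ t <= 1 by case/andP: t01.
have : c * L * t * expR 1 <= L * t / 4.
  have h0 : 0 <= L * t by apply: mulr_ge0.
  have := ler_wpM2r h0 hc; lra.
lra.
Qed.

Lemma pi_pair (u v : 'I_n) :
  prob d q (Iso u) * prob d q (Iso v) =
  prob d q (fun x => Iso u x && Iso v x) *
  \prod_S (1 - a (fun S => [set u; v]%SET \subset S) S).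
Proof.
rewrite (@prob_ext d n q (fun x => Iso u x && Iso v x) (NE (fun S => ([set u]%SET \subset S) || ([set v]%SET \subset S)))); last first.
  move=> x /=; rewrite /Iso /NE; apply/idP/idP.
    case/andP => /forallP h1 /forallP h2.
    by apply/forallP => S; apply/implyP => /orP[/(implyP (h1 S))|/(implyP (h2 S))].
  move/forallP => h.
  by apply/andP; split; apply/forallP => S; apply/implyP => hS; apply: (implyP (h S)); rewrite hS ?orbT.
rewrite /Iso !prob_NE -!big_split /=; apply: eq_bigr => S _.
rewrite /a finset.subUset.
case: ([set u]%SET \subset S); case: ([set v]%SET \subset S); case: (edge_size_ok d S) => /=; lra.
Qed.

Lemma probE (E : pred (conf n)) :
  prob d q E = \sum_(x : conf n) weight d q x * (E x)%:R.
Proof.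
rewrite /prob big_mkcond /=; apply: eq_bigr => x _.
by case: (E x); rewrite ?mulr1 ?mulr0.
Qed.

Lemma noiso_bound :
  prob d q (fun x => [forall u, ~~ Iso u x]) <=
  (\sum_u prob d q (Iso u))^-1 + (1 - L * t / 4)^-1 - 1.
Proof.
set mu := \sum_u prob d q (Iso u).
set r := 1 - L * t / 4.
set P0 := prob d q _.
have w0 := weight_ge0 q01.
have Lt1 : L * t <= 1 by rewrite /t ler_pdivrMr // mul1r.
have Lt0 : 0 <= L * t by apply: mulr_ge0 => //; case/andP: t01.
have r0 : 0 < r by rewrite /r; lra.
have mu0 : 0 < mu.
  have i0 : (0 < n)%N by lia.
  rewrite /mu (bigD1 (Ordinal i0)) //=.
  apply: (lt_le_trans (expR_gt0 (- (L / 2)))).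
  apply: (le_trans (pi_ge (Ordinal i0))).
  rewrite lerDl; apply: sumr_ge0 => v _; exact: prob_ge0.
pose X (x : conf n) : R := \sum_u (Iso u x)%:R.
have hE1 : \sum_(x : conf n) weight d q x = 1.
  by rewrite -(prob_total d n q); apply: eq_bigl.
have hEX : \sum_(x : conf n) weight d q x * X x = mu.
  rewrite /X /mu; under eq_bigr do rewrite mulr_sumr.
  by rewrite exchange_big; apply: eq_bigr => u _; rewrite probE.
have hEX2 : \sum_(x : conf n) weight d q x * X x ^+ 2 =
    \sum_u \sum_v prob d q (fun x => Iso u x && Iso v x).
  have -> : \sum_(x : conf n) weight d q x * X x ^+ 2 =
      \sum_(x : conf n) \sum_u \sum_v weight d q x * ((Iso u x && Iso v x)%:R).
    apply: eq_bigr => x _; rewrite /X expr2 mulr_suml mulr_sumr; apply: eq_bigr => u _.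
    rewrite mulr_sumr mulr_sumr; apply: eq_bigr => v _.
    by case: (Iso u x); case: (Iso v x); rewrite ?mulr1 ?mulr0 ?mul0r.
  rewrite exchange_big; apply: eq_bigr => u _; rewrite exchange_big.
  by apply: eq_bigr => v _; rewrite probE.
have cheb : P0 * mu ^+ 2 <= \sum_u \sum_v prob d q (fun x => Iso u x && Iso v x) - mu ^+ 2.
  apply: (@le_trans _ _ (\sum_(x : conf n) weight d q x * (X x - mu) ^+ 2)).
    rewrite /P0 probE mulr_suml; apply: ler_sum => x _.
    rewrite -mulrA; apply: ler_wpM2l => //.
    case: (boolP [forall u, ~~ Iso u x]) => [/forallP h|_]; last by rewrite mul0r sqr_ge0.
    have -> : X x = 0 by rewrite /X big1 // => u _; rewrite (negbTE (h u)).
    by rewrite mul1r sub0r sqrrN.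
  have -> : \sum_(x : conf n) weight d q x * (X x - mu) ^+ 2 =
     \sum_(x : conf n) (weight d q x * X x ^+ 2 - (2 * mu) * (weight d q x * X x) + mu ^+ 2 * weight d q x).
    by apply: eq_bigr => x _; ring.
  rewrite big_split /= sumrB -!mulr_sumr hEX hEX2 hE1.
  by rewrite le_eqVlt; apply/orP; left; apply/eqP; ring.
have pairs : \sum_u \sum_v prob d q (fun x => Iso u x && Iso v x) <= mu + mu ^+ 2 / r.
  have -> : mu ^+ 2 / r = \sum_u \sum_v (prob d q (Iso u) * prob d q (Iso v) / r).
    rewrite expr2 {1}/mu !mulr_suml; apply: eq_bigr => u _.
    by rewrite mulr_sumr mulr_suml.
  rewrite /mu -big_split /=; apply: ler_sum => u _.
  rewrite (bigD1 u) //= lerD //.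
    by rewrite (@prob_ext _ _ _ _ (Iso u)) // => x; rewrite andbb.
  apply: (@le_trans _ _ (\sum_(v | v != u) (prob d q (Iso u) * prob d q (Iso v) / r))).
    apply: ler_sum => v vu.
    have hp := pi_pair u v.
    have hr := rho_ge (u := u) (v := v); rewrite eq_sym vu in hr; have {}hr := hr isT.
    have p0 := prob_ge0 q01 (fun x => Iso u x && Iso v x).
    rewrite ler_pdivlMr // hp; apply: ler_wpM2l => //.
  apply: sum_le_cond => // v; apply: mulr_ge0; last by rewrite invr_ge0 ltW.
  by apply: mulr_ge0; exact: prob_ge0.
have mu2 : 0 < mu ^+ 2 by apply: exprn_gt0.
rewrite -(ler_pM2r mu2).
have -> : (mu^-1 + r^-1 - 1) * mu ^+ 2 = mu + mu ^+ 2 / r - mu ^+ 2.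
  by field; rewrite ?gt_eqF.
apply: (le_trans cheb); rewrite lerD2r //.
Qed.

Lemma partI_bound :
  1 - (n%:R * expR (- (L / 2)))^-1 - L * t / 2 <=
  prob d q (fun x : conf n => ~~ top_connected d x).
Proof.
have hb := noiso_bound.
have hc' := prob_compl d q (fun x : conf n => [forall u, ~~ Iso u x]).
have hle : prob d q (fun x => ~~ [forall u, ~~ Iso u x]) <=
           prob d q (fun x : conf n => ~~ top_connected d x).
  apply: prob_le => // x /forallPn[u]; rewrite negbK => hu.
  apply: (@iso_disconn d n x u) => //.
  apply/forallP => S; apply/implyP => uS.
  by apply: (implyP (forallP hu S)); rewrite finset.sub1set.
have Lt1 : L * t <= 1 by rewrite /t ler_pdivrMr // mul1r.
have Lt0 : 0 <= L * t by apply: mulr_ge0 => //; case/andP: t01.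
have hr : (1 - L * t / 4)^-1 - 1 <= L * t / 2.
  have r0 : 0 < 1 - L * t / 4 by lra.
  rewrite lerBlDr -[X in X <= _]mul1r ler_pdivrMr //.
  nra.
have hm : (\sum_u prob d q (Iso u))^-1 <= (n%:R * expR (- (L / 2)))^-1.
  have e0 := expR_gt0 (- (L / 2)).
  rewrite lef_pV2 ?posrE ?mulr_gt0 //; last first.
    apply: (lt_le_trans (mulr_gt0 n0 e0)).
    have -> : n%:R * expR (- (L / 2)) = \sum_(u < n) expR (- (L / 2)).
      by rewrite sumr_const card_ord mulr_natl.
    by apply: ler_sum => u _; apply: pi_ge.
  have -> : n%:R * expR (- (L / 2)) = \sum_(u < n) expR (- (L / 2)).
    by rewrite sumr_const card_ord mulr_natl.
  by apply: ler_sum => u _; apply: pi_ge.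
lra.
Qed.

End PartI.


Lemma cvg1 (a f : nat -> R) :
  (exists N, forall n, (N <= n)%N -> 1 - f n <= a n <= 1) ->
  (forall e, 0 < e -> exists N, forall n, (N <= n)%N -> f n <= e) ->
  a @ \oo --> (1 : R).
Proof.
move=> [N1 h1] h2; apply/(@cvgrPdist_le R R^o) => e e0.
have [N2 hN2] := h2 e e0.
apply: filterS (nbhs_infty_ge (maxn N1 N2)) => n hn.
have /andP[b1 b2] := h1 n (leq_trans (leq_maxl _ _) hn).
have := hN2 n (leq_trans (leq_maxr _ _) hn).
rewrite ger0_norm; lra.
Qed.

Lemma archi_nat (x : R) : exists N : nat, x <= N%:R.
Proof.
case: (lerP 0 x) => hx; last by exists 0%N; rewrite ltW.
by exists (Num.Def.archi_bound x); apply: ltW; apply: archi_boundP.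
Qed.

Lemma prob_le1 d n (q : nat -> R) (E : pred (conf n)) :
  (forall k, (1 <= k <= d)%N -> 0 <= q k <= 1) -> prob d q E <= 1.
Proof.
move=> q01; have := prob_compl d q E; have := prob_ge0 q01 (fun x => ~~ E x); lra.
Qed.

Lemma ln_le_n (n : nat) : (1 <= n)%N -> ln (n%:R : R) <= n%:R.
Proof.
move=> n1; have := @le_ln1Dx R (n%:R - 1); rewrite addrCA subrr addr0.
have : (1 : R) <= n%:R by rewrite ler1n.
move=> h1 h; have := h ltac:(lra); lra.
Qed.

Lemma s_facts (n : nat) : (1 <= n)%N ->
  let L := ln (n%:R : R) in let s := expR (L / 2) in
  [/\ 0 < s, n%:R = s * s, n%:R * expR (- (L / 2)) = s & L <= 2 * s].
Proof.
move=> n1 L s.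
have s0 : 0 < s by apply: expR_gt0.
have n0 : (0 : R) < n%:R by rewrite ltr0n.
have nss : n%:R = s * s by rewrite /s -exp.expRD -splitr /L lnK // posrE.
split => //.
  by rewrite nss expRN -/s -mulrA mulfV ?mulr1 // gt_eqF.
have : ln s <= s - 1.
  have := @le_ln1Dx R (s - 1); rewrite addrCA subrr addr0; apply; lra.
rewrite /s expRK; lra.
Qed.

Unset Implicit Arguments.
Theorem lemma3p2 (d : nat) (hd : (2 <= d)%N) :
  exists cm cp : R, 0 < cm /\ 0 < cp /\
  (forall p : nat -> nat -> R,
     (forall n k, (1 <= k <= d)%N -> 0 <= p n k <= 1) ->
     (exists N : nat, forall n : nat, (N <= n)%N ->
        forall k, (1 <= k <= d)%N -> p n k <= cm * ln n%:R / n%:R ^+ k) ->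
     (fun n => prob d (p n) (fun x : conf n => ~~ top_connected d x)) @ \oo --> (1 : R)) /\
  (forall p : nat -> nat -> R,
     (forall n k, (1 <= k <= d)%N -> 0 <= p n k <= 1) ->
     (exists N : nat, forall n : nat, (N <= n)%N ->
        exists k, (1 <= k <= d)%N /\ cp * ln n%:R / n%:R ^+ k <= p n k) ->
     (fun n => prob d (p n) (fun x : conf n => top_connected d x)) @ \oo --> (1 : R)).
Proof.
have e0 := expR_gt0 (1 : R).
exists (4 * expR 1)^-1, (2 * (4 ^ d * d`!)%N%:R).
split; first by rewrite invr_gt0 mulr_gt0.
split; first by rewrite mulr_gt0 // ltr0n muln_gt0 expn_gt0 fact_gt0.
split.
  move=> p p01 [N hN].
  apply: (@cvg1 _ (fun n => 2 / expR (ln n%:R / 2))).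
    exists (maxn N 2) => n hn.
    have nN : (N <= n)%N by apply: leq_trans hn; apply: leq_maxl.
    have n2 : (2 <= n)%N by apply: leq_trans hn; apply: leq_maxr.
    apply/andP; split; last exact: prob_le1 (p01 n).
    have c0 : 0 <= (4 * expR 1 : R)^-1 by apply: ltW; rewrite invr_gt0 mulr_gt0.
    have hc : (4 * expR 1 : R)^-1 * expR 1 <= 1 / 4.
      by rewrite invfM -mulrA mulVf ?gt_eqF // mulr1 div1r.
    have L0 : 0 <= ln (n%:R : R) by apply: ln_ge0; rewrite ler1n; lia.
    have Ln := ln_le_n (ltnW n2).
    have hb := partI_bound (p01 n) n2 c0 hc L0 Ln (hN n nN).
    apply: le_trans hb.
    have [s0 nss hns Ls] := s_facts (ltnW n2).
    move: nss hns Ls s0; set L := ln _; set s := expR _ => nss hns Ls s0.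
    rewrite hns.
    have : L / n%:R / 2 <= s^-1.
      rewrite nss -mulrA -invfM ler_pdivrMr ?mulr_gt0 //.
      rewrite -!mulrA mulKf ?gt_eqF //; lra.
    lra.
  move=> e e0'.
  have [N0 hN0] := archi_nat (4 / e ^+ 2).
  exists (maxn N0 1) => n hn.
  have n1 : (1 <= n)%N by apply: leq_trans hn; apply: leq_maxr.
  have nN : (N0 <= n)%N by apply: leq_trans hn; apply: leq_maxl.
  have [s0 nss _ _] := s_facts n1.
  move: nss s0; set s := expR _ => nss s0.
  rewrite ler_pdivrMr //.
  have : 4 / e ^+ 2 <= s * s by rewrite -nss; apply: le_trans hN0 _; rewrite ler_nat.
  rewrite ler_pdivrMr ?exprn_gt0 // => h.
  have es0 : 0 <= e * s by apply: mulr_ge0; apply: ltW.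
  nra.
move=> p p01 [N hN].
apply: (@cvg1 _ (fun n => 2 / n%:R)).
  exists (maxn N (maxn (4 * d) 2)) => n hn.
  have nN : (N <= n)%N by apply: leq_trans hn; apply: leq_maxl.
  have n4 : (4 * d <= n)%N by move: hn; rewrite !geq_max => /and3P[].
  have n2 : (2 <= n)%N by move: hn; rewrite !geq_max => /and3P[].
  have [k [hk hq]] := hN n nN.
  have h := partII (p01 n) hk n4 n2 hq.
  have hc := prob_compl d (p n) (fun x : conf n => top_connected d x).
  apply/andP; split; last exact: prob_le1 (p01 n).
  lra.
move=> e e0'.
have [N0 hN0] := archi_nat (2 / e).
exists (maxn N0 1) => n hn.
have n1 : (1 <= n)%N by apply: leq_trans hn; apply: leq_maxr.
have nN : (N0 <= n)%N by apply: leq_trans hn; apply: leq_maxl.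
have n0 : (0 : R) < n%:R by rewrite ltr0n.
rewrite ler_pdivrMr // mulrC -ler_pdivrMr //.
by apply: le_trans hN0 _; rewrite ler_nat.
Qed.
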